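(* In the deterministic generalized top-$k$ selective gossip setting described in the context (with $G$ connected), let $\{a,b\}\in E$. If for some candidate $j\in[n]$ and some agent $i\in[m]$ we have $X_{ij}(\infty)>\alpha_{ab}$, then $j\in S^\infty_{a'b'}$ for every $\{a',b'\}\in E$.
   Context: Fix integers $m\ge2$, $n\ge1$, $k\in[n]$. For $v\in\mathbb{R}^n$ let $\sigma$ be a permutation of $[n]$ with $v_{\sigma(1)}\ge\cdots\ge v_{\sigma(n)}$ and set $T_k(v)=\{j\in[n]: v_j\ge v_{\sigma(k)}\}$. Let $\{i_1(t),i_2(t)\}_{t\ge0}$ be a deterministic sequence of unordered pairs of distinct agents in $[m]$, and let $E$ be the set of pairs $\{a,b\}$ with $\{i_1(t),i_2(t)\}=\{a,b\}$ for infinitely many $t$; assume the graph $G=([m],E)$ is connected. Let $X(0)\in\mathbb{R}^{m\times n}$ and define $X(t)$ by: $S(t)=T_k(X_{i_1(t)}(t))\cup T_k(X_{i_2(t)}(t))$ (where $X_i(t)$ is row $i$), $X_{ij}(t+1)=\tfrac12(X_{i_1(t)j}(t)+X_{i_2(t)j}(t))$ if $i\in\{i_1(t),i_2(t)\}$ and $j\in S(t)$, and $X_{ij}(t+1)=X_{ij}(t)$ otherwise. The limit $X(\infty)=\lim_{t\to\infty}X(t)$ exists. For $\{a,b\}\in E$ let $\beta_{ab}(s)$ be the $s$-th time $t$ with $\{i_1(t),i_2(t)\}=\{a,b\}$, let $S^\infty_{ab}=\bigcap_{t\ge0}\bigcup_{s\ge t}S(\beta_{ab}(s))$, and $\alpha_{ab}=\min_{j\in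 S^\infty_{ab}}X_{aj}(\infty)$ (which also equals $\min_{j\in S^\infty_{ab}}X_{bj}(\infty)$). *)

(* Defs.v *)
From Stdlib Require Import Reals Lra Lia Relations.
Open Scope R_scope.

(* Indexing conventions: agents [m] = {0,...,m-1}, candidates [n] = {0,...,n-1},
   rows/vectors are functions nat -> R; only indices < n are meaningful. *)

Definition sorting_perm (n : nat) (v : nat -> R) (sigma : nat -> nat) : Prop :=
  (forall p, (p < n)%nat -> (sigma p < n)%nat) /\
  (forall p q, (p < n)%nat -> (q < n)%nat -> sigma p = sigma q -> p = q) /\
  (forall p q, (p <= q)%nat -> (q < n)%nat -> v (sigma q) <= v (sigma p)).

(* T_k(v) = { j in [n] : v_j >= v_{sigma(k)} }  (k is 1-indexed, so sigma(k)
   is sigma (k-1) with 0-indexed positions).  The threshold v_{sigma(k)}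
   does not depend on the choice of sorting permutation sigma. *)
Definition topk (n k : nat) (v : nat -> R) (j : nat) : Prop :=
  (j < n)%nat /\
  exists sigma, sorting_perm n v sigma /\ v (sigma (k - 1)%nat) <= v j.

Definition pair_is (i1 i2 : nat -> nat) (t a b : nat) : Prop :=
  (i1 t = a /\ i2 t = b) \/ (i1 t = b /\ i2 t = a).

Definition Edge (i1 i2 : nat -> nat) (a b : nat) : Prop :=
  forall T : nat, exists t, (T <= t)%nat /\ pair_is i1 i2 t a b.

Definition connected_graph (m : nat) (i1 i2 : nat -> nat) : Prop :=
  forall a b, (a < m)%nat -> (b < m)%nat -> clos_refl_trans nat (Edge i1 i2) a b.

Definition Sset (n k : nat) (X : nat -> nat -> nat -> R) (i1 i2 : nat -> nat)
  (t j : nat) : Prop :=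
  topk n k (X t (i1 t)) j \/ topk n k (X t (i2 t)) j.

Definition gossip_dynamics (n k : nat) (X : nat -> nat -> nat -> R)
  (i1 i2 : nat -> nat) : Prop :=
  forall t i j,
    (((i = i1 t \/ i = i2 t) /\ Sset n k X i1 i2 t j) ->
       X (S t) i j = (X t (i1 t) j + X t (i2 t) j) / 2) /\
    (~ ((i = i1 t \/ i = i2 t) /\ Sset n k X i1 i2 t j) ->
       X (S t) i j = X t i j).

(* S^infty_{ab} = bigcap_t bigcup_{s>=t} S(beta_ab(s)), i.e. j lies in S(t)
   for infinitely many of the times t at which the pair {a,b} interacts. *)
Definition Sinf (n k : nat) (X : nat -> nat -> nat -> R) (i1 i2 : nat -> nat)
  (a b j : nat) : Prop :=
  forall T : nat, exists t, (T <= t)%nat /\ pair_is i1 i2 t a b /\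
    Sset n k X i1 i2 t j.

Definition is_min_on (P : nat -> Prop) (f : nat -> R) (alpha : R) : Prop :=
  (exists j, P j /\ f j = alpha) /\ (forall j, P j -> alpha <= f j).

(* Main.v *)
Require Import Defs.
From Stdlib Require Import Reals.
From Stdlib Require Import Lra Lia Relations List Classical ClassicalDescription.
Open Scope R_scope.

Definition decb (P : Prop) : bool := if excluded_middle_informative P then true else false.
Lemma decb_true P : decb P = true <-> P.
Proof. unfold decb; destruct (excluded_middle_informative P); split; intros; try tauto; discriminate. Qed.

Definition cnt (n : nat) (P : nat -> Prop) : nat :=
  length (filter (fun j => decb (P j)) (seq 0 n)).

Lemma in_cnt n P j : In j (filter (fun j => decb (P j)) (seq 0 n)) <-> (j < n)%nat /\ P j.
Proof. rewrite filter_In, in_seq, decb_true. split; intros [H1 H2]; split; auto; lia. Qed.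

Lemma cnt_mono n (P Q : nat -> Prop) : (forall x, (x < n)%nat -> P x -> Q x) -> (cnt n P <= cnt n Q)%nat.
Proof.
  intros H. unfold cnt. apply NoDup_incl_length.
  - apply NoDup_filter, seq_NoDup.
  - intros x Hx. apply in_cnt in Hx. apply in_cnt. destruct Hx; split; auto.
Qed.

Lemma cnt_le_of_image n (P : nat -> Prop) (f : nat -> nat) r :
  (forall j, (j < n)%nat -> P j -> exists q, (q < r)%nat /\ f q = j) -> (cnt n P <= r)%nat.
Proof.
  intros H. unfold cnt. transitivity (length (map f (seq 0 r))); [|rewrite length_map, length_seq; lia].
  apply NoDup_incl_length.
  - apply NoDup_filter, seq_NoDup.
  - intros x Hx. apply in_cnt in Hx. destruct Hx as [H1 H2].
    destruct (H x H1 H2) as [q [Hq E]]. apply in_map_iff. exists q. split; auto.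
    apply in_seq; lia.
Qed.

Lemma cnt_ge_of_inj n (P : nat -> Prop) (f : nat -> nat) r :
  (forall q, (q < r)%nat -> (f q < n)%nat /\ P (f q)) ->
  (forall p q, (p < r)%nat -> (q < r)%nat -> f p = f q -> p = q) -> (r <= cnt n P)%nat.
Proof.
  intros H Hi. unfold cnt. transitivity (length (map f (seq 0 r))); [rewrite length_map, length_seq; lia|].
  apply NoDup_incl_length.
  - apply NoDup_map_NoDup_ForallPairs; [|apply seq_NoDup].
    intros x y Hx Hy E. apply in_seq in Hx. apply in_seq in Hy. apply Hi; auto; lia.
  - intros x Hx. apply in_map_iff in Hx. destruct Hx as [q [E Hq]]. apply in_seq in Hq.
    subst. apply in_cnt. apply H. lia.
Qed.

Lemma surj_of_inj n (s : nat -> nat) :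
  (forall p, (p < n)%nat -> (s p < n)%nat) ->
  (forall p q, (p < n)%nat -> (q < n)%nat -> s p = s q -> p = q) ->
  forall j, (j < n)%nat -> exists q, (q < n)%nat /\ s q = j.
Proof.
  intros Hr Hi j Hj.
  assert (Hin : In j (map s (seq 0 n))).
  { apply (@NoDup_length_incl _ (map s (seq 0 n)) (seq 0 n)).
    - apply NoDup_map_NoDup_ForallPairs; [|apply seq_NoDup].
      intros x y Hx Hy E. apply in_seq in Hx. apply in_seq in Hy. apply Hi; auto; lia.
    - rewrite length_map, !length_seq; lia.
    - intros x Hx. apply in_map_iff in Hx. destruct Hx as [q [E Hq]]. apply in_seq in Hq.
      subst. apply in_seq. specialize (Hr q). lia.
    - apply in_seq; lia. }
  apply in_map_iff in Hin. destruct Hin as [q [E Hq]]. apply in_seq in Hq. exists q; split; auto; lia.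
Qed.

Lemma sort_exists (v : nat -> R) : forall n, exists sigma, sorting_perm n v sigma.
Proof.
  induction n as [|n IH].
  - exists (fun q => q). unfold sorting_perm. repeat split; intros; lia.
  - destruct IH as [s [Hr [Hi Hs]]].
    assert (Hp : exists p, (p <= n)%nat /\ (forall q, (q < p)%nat -> v n <= v (s q)) /\
                 (forall q, (p <= q)%nat -> (q < n)%nat -> v (s q) < v n)).
    { assert (H : forall r, (r <= n)%nat -> (forall q, (q < r)%nat -> v n <= v (s q)) \/
              exists p, (p < r)%nat /\ (forall q, (q < p)%nat -> v n <= v (s q)) /\ v (s p) < v n).
      { induction r as [|r IHr]; intros Hr'.
        - left; intros; lia.
        - destruct (IHr ltac:(lia)) as [H|[p [Hp1 [Hp2 Hp3]]]].
          + destruct (Rlt_le_dec (v (s r)) (v n)) as [Hlt|Hge].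
            * right. exists r. split; [lia|]. split; auto.
            * left. intros q Hq. destruct (Nat.eq_dec q r); [subst; auto| apply H; lia].
          + right. exists p. split; [lia|]. auto. }
      destruct (H n (le_n n)) as [H1|[p [Hp1 [Hp2 Hp3]]]].
      - exists n. split; [lia|]. split; auto. intros; lia.
      - exists p. split; [lia|]. split; auto. intros q Hq1 Hq2.
        apply Rle_lt_trans with (v (s p)); auto. }
    destruct Hp as [p [Hpn [Hlo Hhi]]].
    assert (Hr' : forall q, (q < n)%nat -> s q <> n) by (intros q Hq; specialize (Hr q Hq); lia).
    exists (fun q => if (q <? p)%nat then s q else if (q =? p)%nat then n else s (q - 1)%nat).
    unfold sorting_perm. split; [|split].
    + intros q Hq. cbv beta. destruct (Nat.ltb_spec q p); [specialize (Hr q); lia|].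
      destruct (Nat.eqb_spec q p); [lia|]. specialize (Hr (q-1)%nat); lia.
    + intros q r Hq Hr2. cbv beta.
      destruct (Nat.ltb_spec q p); destruct (Nat.eqb_spec q p);
      destruct (Nat.ltb_spec r p); destruct (Nat.eqb_spec r p); intros E;
      first [ lia | (apply Hi in E; lia) | (exfalso; eapply Hr'; [|eassumption]; lia)
            | (exfalso; eapply Hr'; [|symmetry; eassumption]; lia) ].
    + intros q r Hqr Hrn. cbv beta.
      destruct (Nat.ltb_spec q p); destruct (Nat.eqb_spec q p);
      destruct (Nat.ltb_spec r p); destruct (Nat.eqb_spec r p);
      first [ lia | apply Rle_refl | (apply Hs; lia) | (apply Hlo; lia) | (left; apply Hhi; lia) ].
Qed.

Lemma fin_ev (P : nat -> nat -> Prop) : forall n,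
  (forall j, (j < n)%nat -> exists T, forall t, (T <= t)%nat -> P j t) ->
  exists T, forall j t, (j < n)%nat -> (T <= t)%nat -> P j t.
Proof.
  induction n as [|n IH]; intros H.
  - exists 0%nat; intros; lia.
  - destruct IH as [T1 H1]. { intros j Hj; apply H; lia. }
    destruct (H n (Nat.lt_succ_diag_r n)) as [T2 H2].
    exists (Nat.max T1 T2). intros j t Hj Ht.
    destruct (Nat.eq_dec j n). subst; apply H2; lia. apply H1; lia.
Qed.

Lemma ev_lt (u w : nat -> R) (l1 l2 : R) : Un_cv u l1 -> Un_cv w l2 -> l1 < l2 ->
  exists T, forall t, (T <= t)%nat -> u t < w t.
Proof.
  intros Hu Hw Hl.
  destruct (Hu ((l2 - l1)/2)) as [N1 H1]; [lra|].
  destruct (Hw ((l2 - l1)/2)) as [N2 H2]; [lra|].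
  exists (Nat.max N1 N2). intros t Ht.
  specialize (H1 t ltac:(lia)). specialize (H2 t ltac:(lia)).
  unfold R_dist in *. apply Rabs_def2 in H1. apply Rabs_def2 in H2. lra.
Qed.

Theorem mainTheorem6
  (m n k : nat) (hm : (2 <= m)%nat) (hn : (1 <= n)%nat)
  (hk1 : (1 <= k)%nat) (hkn : (k <= n)%nat)
  (i1 i2 : nat -> nat)
  (hi1 : forall t, (i1 t < m)%nat) (hi2 : forall t, (i2 t < m)%nat)
  (hdist : forall t, i1 t <> i2 t)
  (hconn : connected_graph m i1 i2)
  (X : nat -> nat -> nat -> R)
  (hdyn : gossip_dynamics n k X i1 i2)
  (Xinf : nat -> nat -> R)
  (hlim : forall i j, (i < m)%nat -> (j < n)%nat ->
            Un_cv (fun t => X t i j) (Xinf i j))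
  (a b : nat) (hab : Edge i1 i2 a b)
  (alpha : R)
  (halpha : is_min_on (Sinf n k X i1 i2 a b) (fun j => Xinf a j) alpha)
  (i j : nat) (hi : (i < m)%nat) (hj : (j < n)%nat)
  (hgt : alpha < Xinf i j) :
  forall a' b', Edge i1 i2 a' b' -> Sinf n k X i1 i2 a' b' j.
Proof.
  assert (Hrange : forall c d, Edge i1 i2 c d -> (c < m)%nat /\ (d < m)%nat).
  { intros c d He. destruct (He 0%nat) as [t [_ [[E1 E2]|[E1 E2]]]];
      subst; split; auto. }
  assert (Hpm : forall t c d, pair_is i1 i2 t c d ->
            (c = i1 t \/ c = i2 t) /\ (d = i1 t \/ d = i2 t)).
  { intros t c d [[E1 E2]|[E1 E2]]; subst; tauto. }
  assert (HinS : forall t z x, (z = i1 t \/ z = i2 t) -> topk n k (X t z) x ->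
            Sset n k X i1 i2 t x).
  { intros t z x [E|E] H; subst; unfold Sset; tauto. }
  assert (Hsn : forall c d x, Sinf n k X i1 i2 c d x -> (x < n)%nat).
  { intros c d x H. destruct (H 0%nat) as [t [_ [_ [[H1 _]|[H1 _]]]]]; auto. }
  assert (HB : forall c d x, Sinf n k X i1 i2 c d x -> (c < m)%nat -> (d < m)%nat ->
            Xinf c x = Xinf d x).
  { intros c d x H Hc Hd. assert (Hx := Hsn _ _ _ H).
    destruct (Req_dec (Xinf c x) (Xinf d x)) as [|Hne]; auto. exfalso.
    set (eps := Rabs (Xinf c x - Xinf d x) / 2).
    assert (Hep : eps > 0).
    { unfold eps. assert (0 < Rabs (Xinf c x - Xinf d x)) by (apply Rabs_pos_lt; lra). lra. }
    destruct (hlim c x Hc Hx eps Hep) as [N1 H1].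
    destruct (hlim d x Hd Hx eps Hep) as [N2 H2].
    destruct (H (Nat.max N1 N2)) as [t [Ht [Hp HS]]].
    destruct (Hpm _ _ _ Hp) as [Hcm Hdm].
    specialize (H1 (S t) ltac:(lia)). specialize (H2 (S t) ltac:(lia)).
    cbv beta in H1, H2.
    rewrite (proj1 (hdyn t c x) (conj Hcm HS)) in H1.
    rewrite (proj1 (hdyn t d x) (conj Hdm HS)) in H2.
    unfold R_dist in *. apply Rabs_def2 in H1. apply Rabs_def2 in H2.
    assert (Rabs (Xinf c x - Xinf d x) < 2 * eps) by (apply Rabs_def1; lra).
    unfold eps in *. lra. }
  assert (HP : forall c d z x, Edge i1 i2 c d -> (z = c \/ z = d) -> (x < n)%nat ->
            ~ Sinf n k X i1 i2 c d x ->
            Nat.le k (cnt n (fun y => Sinf n k X i1 i2 c d y /\ Xinf z x <= Xinf z y))).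
  { intros c d z x He Hz Hx Hns.
    destruct (Hrange c d He) as [Hc Hd].
    assert (Hzm : (z < m)%nat) by (destruct Hz; subst; auto).
    unfold Sinf at 1 in Hns. apply not_all_ex_not in Hns. destruct Hns as [T0 HT0].
    destruct (fin_ev (fun y t => pair_is i1 i2 t c d -> Sset n k X i1 i2 t y ->
                        Sinf n k X i1 i2 c d y) n) as [T1 HT1].
    { intros y Hy. destruct (classic (Sinf n k X i1 i2 c d y)) as [Hs|Hs].
      - exists 0%nat; auto.
      - unfold Sinf at 1 in Hs. apply not_all_ex_not in Hs. destruct Hs as [T HT].
        exists T. intros t Ht Hp HS. exfalso. apply HT. exists t. auto. }
    destruct (fin_ev (fun y t => Xinf z y < Xinf z x -> X t z y < X t z x) n) as [T2 HT2].
    { intros y Hy. destruct (classic (Xinf z y < Xinf z x)) as [Hl|Hl].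
      - destruct (ev_lt _ _ _ _ (hlim z y Hzm Hy) (hlim z x Hzm Hx) Hl) as [T HT].
        exists T. intros t Ht _. apply HT; auto.
      - exists 0%nat. intros; contradiction. }
    destruct (He (Nat.max T0 (Nat.max T1 T2))) as [t [Ht Hp]].
    assert (Hzt : z = i1 t \/ z = i2 t).
    { destruct (Hpm _ _ _ Hp). destruct Hz; subst; auto. }
    destruct (sort_exists (X t z) n) as [s Hs].
    pose proof Hs as [Hsr [Hsi Hss]].
    assert (Hnot : X t z x < X t z (s (k-1)%nat)).
    { destruct (Rlt_le_dec (X t z x) (X t z (s (k-1)%nat))) as [|Hle]; auto.
      exfalso. apply HT0. exists t. split; [lia|]. split; auto.
      apply HinS with z; auto. split; auto. exists s. split; auto. }
    apply cnt_ge_of_inj with (f := s).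
    - intros q Hq. split; [apply Hsr; lia|]. split.
      + apply HT1 with t; try lia; auto; [apply Hsr; lia|].
        apply HinS with z; auto. split; [apply Hsr; lia|]. exists s. split; auto.
        apply Hss; lia.
      + destruct (Rle_lt_dec (Xinf z x) (Xinf z (s q))) as [|Hl]; auto. exfalso.
        assert (Hq' : (s q < n)%nat) by (apply Hsr; lia).
        specialize (HT2 (s q) t Hq' ltac:(lia) Hl).
        assert (X t z (s (k-1)%nat) <= X t z (s q)) by (apply Hss; lia). lra.
    - intros p q Hp' Hq' E. apply Hsi; auto; lia. }
  assert (HR : forall c d x, Edge i1 i2 c d -> (x < n)%nat ->
            Nat.lt (cnt n (fun y => Xinf c x <= Xinf c y)) k -> Sinf n k X i1 i2 c d x).
  { intros c d x He Hx Hc. destruct (classic (Sinf n k X i1 i2 c d x)) as [|Hns]; auto.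
    exfalso. pose proof (HP c d c x He (or_introl eq_refl) Hx Hns) as H1.
    assert (H2 := cnt_mono n (fun y => Sinf n k X i1 i2 c d y /\ Xinf c x <= Xinf c y)
                   (fun y => Xinf c x <= Xinf c y) ltac:(intros y _ [_ Hy]; exact Hy)).
    lia. }
  assert (HQ : forall c d w, Edge i1 i2 c d ->
            Nat.lt (cnt n (fun y => w <= Xinf c y)) k -> Nat.lt (cnt n (fun y => w <= Xinf d y)) k).
  { intros c d w He Hc. destruct (Hrange c d He) as [Hcm Hdm].
    destruct (classic (exists y, (y < n)%nat /\ w <= Xinf d y /\ ~ Sinf n k X i1 i2 c d y))
      as [[y [Hy [Hw Hns]]]|Hno].
    - exfalso. pose proof (HP c d d y He (or_intror eq_refl) Hy Hns) as H1.
      assert (H2 := cnt_mono n (fun y0 => Sinf n k X i1 i2 c d y0 /\ Xinf d y <= Xinf d y0)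
                   (fun y0 => w <= Xinf c y0)).
      assert (H3 : Nat.le (cnt n (fun y0 => Sinf n k X i1 i2 c d y0 /\ Xinf d y <= Xinf d y0))
                    (cnt n (fun y0 => w <= Xinf c y0))).
      { apply H2. intros z Hz [Hs Hl]. rewrite (HB c d z Hs Hcm Hdm). lra. }
      lia.
    - assert (H3 : Nat.le (cnt n (fun y0 => w <= Xinf d y0)) (cnt n (fun y0 => w <= Xinf c y0))).
      { apply cnt_mono. intros z Hz Hl.
        assert (Hs : Sinf n k X i1 i2 c d z).
        { apply NNPP. intro Hn. apply Hno. exists z. auto. }
        rewrite (HB c d z Hs Hcm Hdm). auto. }
      lia. }
  destruct (Hrange a b hab) as [Ham Hbm].
  destruct halpha as [[js [Hjs Hjsv]] _]. cbv beta in Hjsv.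
  assert (Hjsn := Hsn _ _ _ Hjs).
  assert (Hwit : exists c, (c = a \/ c = b) /\
            forall T, exists t, (T <= t)%nat /\ topk n k (X t c) js).
  { destruct (classic (forall T, exists t, (T <= t)%nat /\ topk n k (X t a) js)) as [H|H].
    - exists a. auto.
    - apply not_all_ex_not in H. destruct H as [T0 HT0].
      exists b. split; auto. intros T.
      destruct (Hjs (Nat.max T T0)) as [t [Ht [Hp HS]]].
      unfold Sset in HS.
      destruct Hp as [[E1 E2]|[E1 E2]]; rewrite E1, E2 in HS; destruct HS as [HS|HS];
        first [ (exists t; split; [lia|exact HS])
              | (exfalso; apply HT0; exists t; split; [lia|exact HS]) ]. }
  destruct Hwit as [c [Hc Hwit]].
  assert (Hcm : (c < m)%nat) by (destruct Hc; subst; auto).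
  assert (Hcv : Xinf c js = alpha).
  { destruct Hc; subst; auto. rewrite <- (HB a b js Hjs Ham Hbm). auto. }
  assert (HW : forall y, alpha < y -> Nat.lt (cnt n (fun x => y <= Xinf c x)) k).
  { intros y Hy. destruct (Nat.lt_ge_cases (cnt n (fun x => y <= Xinf c x)) k) as [|Hge]; auto.
    exfalso.
    destruct (fin_ev (fun x t => y <= Xinf c x -> X t c js < X t c x) n) as [T2 HT2].
    { intros x Hx. destruct (classic (y <= Xinf c x)) as [Hl|Hl].
      - destruct (ev_lt _ _ _ _ (hlim c js Hcm Hjsn) (hlim c x Hcm Hx)) as [T HT]; [lra|].
        exists T. intros t Ht _. apply HT; auto.
      - exists 0%nat. intros; contradiction. }
    destruct (Hwit T2) as [t [Ht [_ [s [Hs Hle]]]]].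
    pose proof Hs as [Hsr [Hsi Hss]].
    assert (Hsur := surj_of_inj n s Hsr Hsi).
    assert (Hcnt : Nat.le (cnt n (fun x => y <= Xinf c x)) (k - 1)).
    { apply cnt_le_of_image with (f := s). intros x Hx Hyx.
      destruct (Hsur x Hx) as [q [Hq E]]. exists q. split; auto.
      destruct (Nat.lt_ge_cases q (k-1)) as [|Hq2]; auto. exfalso.
      specialize (HT2 x t Hx Ht Hyx).
      assert (X t c (s q) <= X t c (s (k-1)%nat)) by (apply Hss; lia).
      subst x. lra. }
    lia. }
  assert (HQpath : forall x y, clos_refl_trans nat (Edge i1 i2) x y -> forall w,
            Nat.lt (cnt n (fun z => w <= Xinf x z)) k -> Nat.lt (cnt n (fun z => w <= Xinf y z)) k).
  { intros x y Hxy. induction Hxy as [x y He| x | x y z _ IH1 _ IH2]; intros w Hw; auto.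
    apply HQ with x; auto. }
  assert (HQi : Nat.lt (cnt n (fun z => Xinf i j <= Xinf i z)) k).
  { apply (HQpath c i (hconn c i Hcm hi)). apply HW. auto. }
  assert (HRpath : forall x y, clos_refl_trans nat (Edge i1 i2) x y ->
            (Xinf x j = Xinf i j /\ Nat.lt (cnt n (fun z => Xinf i j <= Xinf x z)) k) ->
            (Xinf y j = Xinf i j /\ Nat.lt (cnt n (fun z => Xinf i j <= Xinf y z)) k)).
  { intros x y Hxy. induction Hxy as [x y He| x | x y z _ IH1 _ IH2]; intros [E Hw]; auto.
    destruct (Hrange x y He) as [Hxm Hym].
    assert (Hs : Sinf n k X i1 i2 x y j) by (apply HR; auto; rewrite E; auto).
    split.
    - rewrite <- (HB x y j Hs Hxm Hym). auto.
    - apply HQ with x; auto. }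
  intros a' b' He. destruct (Hrange a' b' He) as [Ha' Hb'].
  destruct (HRpath i a' (hconn i a' hi Ha') (conj eq_refl HQi)) as [E Hw].
  apply HR; auto. rewrite E. auto.
Qed.
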